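(* Let $k\in L^1([0,\infty);(0,\infty))\cap C([0,\infty);(0,\infty))$ with $\lambda(t):=\int_t^\infty k(s)\,ds=L(t)t^{-\alpha}$ for some $\alpha>1$ and some $L$ slowly varying at infinity, and let $a=-\int_0^\infty k(s)\,ds$. Then $\int_0^\infty sk(s)\,ds<\infty$ and the resolvent $r$ (unique continuous solution of $r'(t)=ar(t)+\int_0^tk(t-s)r(s)\,ds$, $r(0)=1$) satisfies $$\lim_{t\to\infty}r(t)=\Big(1+\int_0^\infty sk(s)\,ds\Big)^{-1}.$$
   Context: $L:[0,\infty)\to(0,\infty)$ is slowly varying at infinity if $L(xt)/L(t)\to1$ as $t\to\infty$ for every $x>0$. *)

(* Defs.v *)
From Stdlib Require Import Reals Lra.
Open Scope R_scope.

(* [RInt_eq f a b v]: f is Riemann integrable on [a,b] with integral v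
   (RiemannInt is proof-irrelevant, so this is well-behaved). *)
Definition RInt_eq (f : R -> R) (a b v : R) : Prop :=
  exists pr : Riemann_integrable f a b, RiemannInt pr = v.

Definition tends_at_infty (f : R -> R) (l : R) : Prop :=
  forall eps, 0 < eps -> exists M, forall t, M <= t -> Rabs (f t - l) < eps.

Definition improper_int (f : R -> R) (a l : R) : Prop :=
  (forall T, a <= T -> exists v, RInt_eq f a T v) /\
  (forall eps, 0 < eps -> exists M, forall T v, M <= T -> a <= T ->
      RInt_eq f a T v -> Rabs (v - l) < eps).

Definition slowly_varying (L : R -> R) : Prop :=
  (forall t, 0 <= t -> 0 < L t) /\
  forall x, 0 < x -> tends_at_infty (fun t => L (x * t) / L t) 1.

Definition continuous_on_nonneg (f : R -> R) : Prop :=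
  forall t, 0 <= t -> limit1_in f (fun x => 0 <= x) (f t) t.

(* Main.v *)
Require Import Defs.
From Stdlib Require Import Reals.
From Stdlib Require Import Lra Classical ClassicalEpsilon FunctionalExtensionality.
Open Scope R_scope.

Lemma abs_le_inv x a : Rabs x <= a -> -a <= x <= a.
Proof. unfold Rabs; destruct Rcase_abs; lra. Qed.
Lemma abs_lt_inv x a : Rabs x < a -> -a < x < a.
Proof. unfold Rabs; destruct Rcase_abs; lra. Qed.
Lemma abs_lt x a : -a < x < a -> Rabs x < a.
Proof. unfold Rabs; destruct Rcase_abs; lra. Qed.

Definition cont (f:R->R) := forall x, continuity_pt f x.

Definition Ival (f:R->R) (a b:R) : R :=
  match excluded_middle_informative (inhabited (Riemann_integrable f a b)) with
  | left H => RiemannInt (epsilon H (fun _ => True))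
  | right _ => 0 end.

Lemma Ival_eq f a b (pr : Riemann_integrable f a b) : Ival f a b = RiemannInt pr.
Proof.
  unfold Ival; destruct excluded_middle_informative as [H|H].
  - apply RiemannInt_P5.
  - exfalso; apply H; constructor; exact pr.
Qed.

Lemma RI_cont f a b : cont f -> Riemann_integrable f a b.
Proof.
  intros Hf; destruct (Rle_dec a b).
  - apply continuity_implies_RiemannInt; auto.
  - apply RiemannInt_P1, continuity_implies_RiemannInt; auto; lra.
Qed.

Lemma Ival_chasles f a b c : cont f -> Ival f a b + Ival f b c = Ival f a c.
Proof.
  intros Hf; rewrite (Ival_eq _ _ _ (RI_cont f a b Hf)),
   (Ival_eq _ _ _ (RI_cont f b c Hf)), (Ival_eq _ _ _ (RI_cont f a c Hf)).
  apply RiemannInt_P26.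
Qed.

Lemma Ival_refl f a : cont f -> Ival f a a = 0.
Proof. intros Hf; generalize (Ival_chasles f a a a Hf); lra. Qed.

Lemma Ival_swap f a b : cont f -> Ival f b a = - Ival f a b.
Proof. intros Hf; generalize (Ival_chasles f a b a Hf) (Ival_refl f a Hf); lra. Qed.

Lemma Ival_lin f g l a b : cont f -> cont g ->
  Ival (fun x => f x + l * g x) a b = Ival f a b + l * Ival g a b.
Proof.
  intros Hf Hg.
  assert (Hc : cont (fun x => f x + l * g x)).
  { intro x. apply continuity_pt_plus; auto. apply continuity_pt_mult; auto.
    apply continuity_pt_const; intros u v; reflexivity. }
  rewrite (Ival_eq _ _ _ (RI_cont f a b Hf)),
   (Ival_eq _ _ _ (RI_cont g a b Hg)), (Ival_eq _ _ _ (RI_cont _ a b Hc)).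
  apply RiemannInt_P13.
Qed.

Lemma Ival_const c a b : Ival (fun _ => c) a b = c * (b - a).
Proof.
  exact (eq_trans (Ival_eq (fct_cte c) a b (RiemannInt_P14 a b c)) (RiemannInt_P15 _)).
Qed.

Lemma Ival_mono f g a b : a <= b -> cont f -> cont g ->
  (forall x, a <= x <= b -> f x <= g x) -> Ival f a b <= Ival g a b.
Proof.
  intros Hab Hf Hg H.
  rewrite (Ival_eq _ _ _ (RI_cont f a b Hf)), (Ival_eq _ _ _ (RI_cont g a b Hg)).
  apply RiemannInt_P19; auto. intros; apply H; lra.
Qed.

Lemma Ival_bound f a b M : cont f ->
  (forall x, Rmin a b <= x <= Rmax a b -> Rabs (f x) <= M) ->
  Rabs (Ival f a b) <= M * Rabs (b - a).
Proof.
  intros Hf H.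
  assert (gen : forall a b, a <= b -> (forall x, a <= x <= b -> Rabs (f x) <= M) ->
     Rabs (Ival f a b) <= M * (b - a)).
  { clear a b H. intros a b Hab H.
    assert (c1 : Ival f a b <= Ival (fun _ => M) a b).
    { apply Ival_mono; auto. intro; apply continuity_pt_const; intros u v; reflexivity.
      intros x Hx; specialize (H x Hx); apply abs_le_inv in H; lra. }
    assert (c2 : Ival (fun _ => -M) a b <= Ival f a b).
    { apply Ival_mono; auto. intro; apply continuity_pt_const; intros u v; reflexivity.
      intros x Hx; specialize (H x Hx); apply abs_le_inv in H; lra. }
    rewrite Ival_const in c1, c2. apply Rabs_le; lra. }
  destruct (Rle_dec a b).
  - rewrite (Rabs_right (b - a)) by lra. apply gen; auto.
    intros x Hx; apply H; rewrite Rmin_left, Rmax_right; lra.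
  - rewrite Ival_swap, Rabs_Ropp by auto. rewrite (Rabs_left (b - a)) by lra.
    replace (M * - (b - a)) with (M * (a - b)) by ring. apply gen; [lra|].
    intros x Hx; apply H; rewrite Rmin_right, Rmax_left; lra.
Qed.

Lemma Ival_RInt f g a b (pr : Riemann_integrable f a b) : a <= b -> cont g ->
  (forall x, a <= x <= b -> f x = g x) -> RiemannInt pr = Ival g a b.
Proof.
  intros Hab Hg H. rewrite (Ival_eq _ _ _ (RI_cont g a b Hg)).
  apply RiemannInt_P18; auto. intros; apply H; lra.
Qed.

Lemma FTC f a x : cont f -> derivable_pt_lim (fun y => Ival f a y) x (f x).
Proof.
  intros Hf eps Heps.
  destruct (Hf x (eps/2)) as [d [Hd Hd2]]; [lra|].
  exists (mkposreal d Hd). intros h Hh0 Hh. simpl in Hh.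
  rewrite <- (Ival_chasles f a x (x+h) Hf).
  replace ((Ival f a x + Ival f x (x + h) - Ival f a x) / h - f x)
    with ((Ival (fun y => f y + (-1) * f x) x (x + h)) / h).
  2:{ rewrite Ival_lin, Ival_const by (auto; intro; apply continuity_pt_const; intros u v; reflexivity).
      field; auto. }
  assert (B : Rabs (Ival (fun y => f y + (-1) * f x) x (x + h)) <= eps/2 * Rabs (x + h - x)).
  { apply Ival_bound.
    - intro y; apply continuity_pt_plus; auto; apply continuity_pt_const; intros u v; reflexivity.
    - intros y Hy. destruct (Req_dec y x) as [->|Hyx].
      + replace (f x + -1 * f x) with 0 by ring. rewrite Rabs_R0; lra.
      + left. replace (f y + -1 * f x) with (f y - f x) by ring.
        apply Hd2. split. { unfold D_x, no_cond; split; auto. }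
        simpl; unfold Rdist.
        unfold Rmin, Rmax in Hy; destruct (Rle_dec x (x+h));
        apply Rabs_def1; apply Rabs_def2 in Hh; lra. }
  replace (x + h - x) with h in B by ring.
  unfold Rdiv; rewrite Rabs_mult, Rabs_inv.
  apply Rle_lt_trans with (eps / 2 * Rabs h * / Rabs h).
  { apply Rmult_le_compat_r; auto. left; apply Rinv_0_lt_compat, Rabs_pos_lt; auto. }
  field_simplify; [lra | apply Rabs_no_R0; auto].
Qed.

Lemma cont_Ival f a : cont f -> cont (fun y => Ival f a y).
Proof. intros Hf x. eapply derivable_continuous_pt. exists (f x). apply FTC; auto. Qed.

Lemma const_deriv H a b : a <= b ->
  (forall x, a <= x <= b -> continuity_pt H x) ->
  (forall x, a < x < b -> derivable_pt_lim H x 0) -> H b = H a.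
Proof.
  intros Hab Hc Hd. destruct Hab as [Hab| ->]; [|reflexivity].
  assert (pr1 : forall c, a < c < b -> derivable_pt H c).
  { intros c Hc'; exists 0; apply Hd; auto. }
  assert (pr2 : forall c, a < c < b -> derivable_pt id c).
  { intros c Hc'; exists 1; apply derivable_pt_lim_id. }
  destruct (MVT H id a b pr1 pr2 Hab Hc) as [c [P E]].
  { intros; apply derivable_continuous_pt, derivable_pt_id. }
  rewrite (derive_pt_eq_0 _ _ _ _ (Hd c P)) in E.
  rewrite (derive_pt_eq_0 _ _ _ _ (derivable_pt_lim_id c)) in E.
  unfold id in E. assert (H b - H a = 0) by nra. lra.
Qed.

Lemma const_deriv_all H a b : (forall x, derivable_pt_lim H x 0) -> H b = H a.
Proof.
  intros Hd. assert (Hc : forall x, continuity_pt H x).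
  { intro x; apply derivable_continuous_pt; exists 0; apply Hd. }
  destruct (Rle_dec a b).
  - apply const_deriv; auto.
  - symmetry; apply const_deriv; auto; lra.
Qed.

Lemma cont_comp_aff f t : cont f -> cont (fun s => f (t - s)).
Proof.
  intros Hf x. apply (continuity_pt_comp (fun s => t - s) f).
  - apply continuity_pt_minus. apply continuity_pt_const; intros u v; reflexivity.
    apply derivable_continuous_pt, derivable_pt_id.
  - apply Hf.
Qed.

Lemma Ival_subst f t a b : cont f ->
  Ival (fun s => f (t - s)) a b = Ival f (t - b) (t - a).
Proof.
  intros Hf.
  set (H := fun b => Ival (fun s => f (t - s)) a b - Ival f (t - b) (t - a)).
  assert (E : H b = H a).
  { apply const_deriv_all. intro x. unfold H.
    replace 0 with (f (t - x) - f (t - x)) by ring.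
    apply derivable_pt_lim_minus.
    - apply (FTC (fun s => f (t - s))), cont_comp_aff; auto.
    - assert (e : forall y, Ival f (t - y) (t - a) = - Ival f (t-a) (t - y)).
      { intro; apply Ival_swap; auto. }
      apply (derivable_pt_lim_ext (fun y => - Ival f (t-a) (t - y))).
      { intro; rewrite e; auto. }
      replace (f (t - x)) with (- (f (t - x) * (-1))) by ring.
      apply (derivable_pt_lim_opp (fun y => Ival f (t - a) (t - y))).
      apply (derivable_pt_lim_comp (fun y => t - y) (fun y => Ival f (t-a) y)).
      + replace (-1) with (0 - 1) by ring. apply derivable_pt_lim_minus.
        apply derivable_pt_lim_const. apply derivable_pt_lim_id.
      + apply FTC; auto. }
  unfold H in E. rewrite !Ival_refl in E; auto.
  - lra.
  - apply cont_comp_aff; auto.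
Qed.

Lemma cont_const c : cont (fun _ => c).
Proof. intro; apply continuity_pt_const; intros u v; reflexivity. Qed.
Lemma cont_id : cont (fun x => x).
Proof. intro; apply derivable_continuous_pt, derivable_pt_id. Qed.
Lemma cont_plus f g : cont f -> cont g -> cont (fun x => f x + g x).
Proof. intros Hf Hg x; apply continuity_pt_plus; auto. Qed.
Lemma cont_minus f g : cont f -> cont g -> cont (fun x => f x - g x).
Proof. intros Hf Hg x; apply continuity_pt_minus; auto. Qed.
Lemma cont_mult f g : cont f -> cont g -> cont (fun x => f x * g x).
Proof. intros Hf Hg x; apply continuity_pt_mult; auto. Qed.
Lemma cont_opp f : cont f -> cont (fun x => - f x).
Proof. intros Hf x; apply continuity_pt_opp; auto. Qed.
Lemma cont_abs f : cont f -> cont (fun x => Rabs (f x)).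
Proof. intros Hf x; apply (continuity_pt_comp f Rabs); auto. apply Rcontinuity_abs. Qed.

Ltac cont_tac := repeat first [ assumption | apply cont_const | apply cont_id | apply cont_comp_aff | apply cont_mult | apply cont_plus | apply cont_minus | apply cont_opp ].

Lemma cont_at f x eps : continuity_pt f x -> 0 < eps ->
  exists d, 0 < d /\ forall y, Rabs (y - x) < d -> Rabs (f y - f x) < eps.
Proof.
  intros Hc He. destruct (Hc eps He) as [d [Hd H]]. exists d; split; auto.
  intros y Hy. destruct (Req_dec y x) as [->|n].
  - unfold Rminus; rewrite Rplus_opp_r, Rabs_R0; auto.
  - apply H; split; [unfold D_x, no_cond; auto | exact Hy].
Qed.

Lemma deriv_cont phi dphi : (forall x, derivable_pt_lim phi x (dphi x)) -> cont phi.
Proof. intros H x; apply derivable_continuous_pt; exists (dphi x); apply H. Qed.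

Lemma mvt_h phi dphi : (forall x, derivable_pt_lim phi x (dphi x)) ->
  forall x h, exists xi, Rabs (xi - x) <= Rabs h /\ phi (x + h) - phi x = h * dphi xi.
Proof.
  intros Hd x h. destruct (Rtotal_order h 0) as [Hn|[->|Hp]].
  - destruct (MVT_cor2 phi dphi (x + h) x) as [c [E Hc]]; [lra|intros; apply Hd|].
    exists c. split.
    + rewrite (Rabs_left h) by lra. apply Rabs_le; lra.
    + replace (x + h) with (x + h) in E by ring. lra.
  - exists x. split. rewrite Rminus_diag, Rabs_R0; lra. rewrite Rplus_0_r; ring.
  - destruct (MVT_cor2 phi dphi x (x + h)) as [c [E Hc]]; [lra|intros; apply Hd|].
    exists c. split.
    + rewrite (Rabs_right h) by lra. apply Rabs_le; lra.
    + rewrite E; ring.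
Qed.

Lemma bound_compact f a b : cont f -> exists B, 0 < B /\ forall x, a <= x <= b -> Rabs (f x) <= B.
Proof.
  intros Hf. destruct (Rle_dec a b) as [Hab|Hab].
  - destruct (continuity_ab_maj (fun x => Rabs (f x)) a b Hab) as [M [HM _]].
    { intros; apply cont_abs; auto. }
    exists (Rabs (f M) + 1). split. generalize (Rabs_pos (f M)); lra.
    intros x Hx; specialize (HM x Hx); simpl in HM; lra.
  - exists 1; split; [lra|]. intros; lra.
Qed.

Lemma unif_cont f a b eps : cont f -> 0 < eps -> exists d, 0 < d /\
   forall x y, a <= x <= b -> a <= y <= b -> Rabs (x - y) < d -> Rabs (f x - f y) < eps.
Proof.
  intros Hf He. destruct (Rlt_dec a b) as [Hab|Hab].
  - destruct (Heine_cor1 (f:=f) Hab (fun x _ => Hf x) (mkposreal eps He)) as [d [_ Hd]].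
    exists d; split; [apply cond_pos|]. intros; apply Hd; auto.
  - exists 1; split; [lra|]. intros x y Hx Hy _. replace x with y by lra.
    unfold Rminus; rewrite Rplus_opp_r, Rabs_R0; auto.
Qed.

Lemma leibniz phi dphi psi : (forall x, derivable_pt_lim phi x (dphi x)) ->
  cont dphi -> cont psi -> forall t,
  derivable_pt_lim (fun t => Ival (fun s => phi (t - s) * psi s) 0 t) t
     (phi 0 * psi t + Ival (fun s => dphi (t - s) * psi s) 0 t).
Proof.
  intros Hd Hdc Hpc t eps Heps.
  assert (Hpc' := deriv_cont _ _ Hd).
  set (T := Rabs t + 1).
  destruct (bound_compact psi (-T) T Hpc) as [B [HB HBb]].
  set (e1 := eps / (4 * (B * Rabs t + 1))).
  set (e2 := eps / (4 * B)).
  set (e3 := eps / (4 * (Rabs (phi 0) + 1))).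
  assert (He1 : 0 < e1). { unfold e1; apply Rdiv_lt_0_compat; [lra|]. generalize (Rabs_pos t); nra. }
  assert (He2 : 0 < e2). { unfold e2; apply Rdiv_lt_0_compat; lra. }
  assert (He3 : 0 < e3). { unfold e3; apply Rdiv_lt_0_compat; [lra|]. generalize (Rabs_pos (phi 0)); nra. }
  destruct (unif_cont dphi (-T) T e1 Hdc He1) as [d1 [Hd1 U1]].
  destruct (cont_at phi 0 e2 (Hpc' 0) He2) as [d2 [Hd2 U2]].
  destruct (cont_at psi t e3 (Hpc t) He3) as [d3 [Hd3 U3]].
  assert (Hdm : 0 < Rmin 1 (Rmin d1 (Rmin d2 d3))).
  { repeat apply Rmin_pos; lra. }
  exists (mkposreal _ Hdm). intros h Hh0 Hh. simpl in Hh.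
  assert (h1 : Rabs h < 1) by (eapply Rlt_le_trans; [exact Hh| apply Rmin_l]).
  assert (h2 : Rabs h < d1) by (eapply Rlt_le_trans; [exact Hh| eapply Rle_trans; [apply Rmin_r|apply Rmin_l]]).
  assert (h3 : Rabs h < d2) by (eapply Rlt_le_trans; [exact Hh| eapply Rle_trans; [apply Rmin_r|eapply Rle_trans; [apply Rmin_r|apply Rmin_l]]]).
  assert (h4 : Rabs h < d3) by (eapply Rlt_le_trans; [exact Hh| eapply Rle_trans; [apply Rmin_r|eapply Rle_trans; [apply Rmin_r|apply Rmin_r]]]).
  set (Fh := fun s => phi (t + h - s) * psi s).
  set (F0 := fun s => phi (t - s) * psi s).
  set (G := fun s => dphi (t - s) * psi s).
  assert (cFh : cont Fh) by (apply cont_mult; auto; apply cont_comp_aff; auto).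
  assert (cF0 : cont F0) by (apply cont_mult; auto; apply cont_comp_aff; auto).
  assert (cG : cont G) by (apply cont_mult; auto; apply cont_comp_aff; auto).
  set (E1 := Ival (fun s => Fh s + (-1) * (phi 0 * psi t)) t (t + h)).
  set (E2 := Ival (fun s => Fh s + (-1) * (F0 s + h * G s)) 0 t).
  assert (Eq : Ival Fh 0 (t + h) - Ival F0 0 t - h * (phi 0 * psi t + Ival G 0 t) = E1 + E2).
  { unfold E1, E2. rewrite !Ival_lin; auto using cont_const.
    2:{ apply cont_plus; auto. intro x; apply continuity_pt_mult; [apply cont_const| apply cG]. }
    rewrite Ival_const.
    rewrite <- (Ival_chasles Fh 0 t (t + h)) by auto. ring. }
  assert (B1 : Rabs E1 <= (e2 * B + Rabs (phi 0) * e3) * Rabs (t + h - t)).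
  { apply Ival_bound.
    - cont_tac.
    - intros s Hs.
      assert (Hs' : Rabs (s - t) <= Rabs h).
      { unfold Rmin, Rmax in Hs; destruct (Rle_dec t (t + h)); apply Rabs_le;
        apply abs_lt_inv in h1; unfold Rabs; destruct (Rcase_abs h); lra. }
      assert (Hsb : -T <= s <= T).
      { unfold T. apply abs_le_inv in Hs'. assert (Rabs h < 1) by auto.
        unfold Rabs in *; destruct (Rcase_abs t); destruct (Rcase_abs h); destruct (Rcase_abs (s - t)); lra. }
      unfold Fh.
      replace (phi (t + h - s) * psi s + -1 * (phi 0 * psi t))
        with ((phi (t + h - s) - phi 0) * psi s + phi 0 * (psi s - psi t)) by ring.
      eapply Rle_trans; [apply Rabs_triang|]. rewrite !Rabs_mult.
      apply Rplus_le_compat.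
      + apply Rmult_le_compat; auto using Rabs_pos.
        left; apply U2. replace (t + h - s - 0) with (- (s - t - h)) by ring.
        rewrite Rabs_Ropp. apply abs_le_inv in Hs'.
        apply Rle_lt_trans with (Rabs h); [|lra].
        clear -Hs. unfold Rmin, Rmax in Hs; destruct (Rle_dec t (t+h)); apply Rabs_le; unfold Rabs; destruct (Rcase_abs h); lra.
      + apply Rmult_le_compat_l; auto using Rabs_pos. left; apply U3; lra. }
  assert (B2 : Rabs E2 <= (Rabs h * e1 * B) * Rabs (t - 0)).
  { apply Ival_bound.
    - cont_tac.
    - intros s Hs. unfold Fh, F0, G.
      destruct (mvt_h phi dphi Hd (t - s) h) as [xi [Hxi Exi]].
      replace (t + h - s) with (t - s + h) by ring.
      replace (phi (t - s + h) * psi s + -1 * (phi (t - s) * psi s + h * (dphi (t - s) * psi s)))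
        with ((phi (t - s + h) - phi (t - s)) * psi s - h * dphi (t - s) * psi s) by ring.
      rewrite Exi.
      replace (h * dphi xi * psi s - h * dphi (t - s) * psi s) with (h * ((dphi xi - dphi (t - s)) * psi s)) by ring.
      rewrite !Rabs_mult. rewrite Rmult_assoc. apply Rmult_le_compat_l; auto using Rabs_pos.
      assert (Hsb : Rabs s <= Rabs t /\ Rabs (t - s) <= Rabs t).
      { unfold Rmin, Rmax in Hs; destruct (Rle_dec 0 t); unfold Rabs;
        destruct (Rcase_abs s); destruct (Rcase_abs t); destruct (Rcase_abs (t - s)); lra. }
      apply Rmult_le_compat; auto using Rabs_pos.
      + left; apply U1.
        * apply abs_le_inv in Hxi. destruct Hsb as [_ Hts]. apply abs_le_inv in Hts.
          unfold T; unfold Rabs in *; destruct (Rcase_abs t); destruct (Rcase_abs h);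
          destruct (Rcase_abs (xi - (t - s))); lra.
        * destruct Hsb as [_ Hts]. apply abs_le_inv in Hts. unfold T; lra.
        * lra.
      + apply HBb. destruct Hsb as [Hs1 _]. apply abs_le_inv in Hs1. unfold T; lra. }
  replace (t + h - t) with h in B1 by ring. rewrite Rminus_0_r in B2.
  replace ((Ival Fh 0 (t + h) - Ival F0 0 t) / h - (phi 0 * psi t + Ival G 0 t))
    with ((E1 + E2) / h).
  2:{ rewrite <- Eq. field; auto. }
  unfold Rdiv; rewrite Rabs_mult, Rabs_inv.
  assert (Hha : 0 < Rabs h) by (apply Rabs_pos_lt; auto).
  apply Rle_lt_trans with ((e2 * B + Rabs (phi 0) * e3 + e1 * B * Rabs t) * Rabs h * / Rabs h).
  { apply Rmult_le_compat_r. left; apply Rinv_0_lt_compat; auto.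
    eapply Rle_trans; [apply Rabs_triang|]. nra. }
  rewrite Rmult_assoc, Rinv_r, Rmult_1_r by lra.
  assert (e2 * B = eps / 4) by (unfold e2; field; lra).
  assert (Rabs (phi 0) * e3 <= eps / 4).
  { unfold e3. generalize (Rabs_pos (phi 0)); intro.
    apply Rmult_le_reg_r with (4 * (Rabs (phi 0) + 1)); [lra|].
    field_simplify; [|lra]. nra. }
  assert (e1 * B * Rabs t <= eps / 4).
  { unfold e1. generalize (Rabs_pos t); intro.
    apply Rmult_le_reg_r with (4 * (B * Rabs t + 1)); [nra|].
    field_simplify; [|nra]. nra. }
  lra.
Qed.

Lemma Ival_ext f g a b : (forall x, f x = g x) -> Ival f a b = Ival g a b.
Proof. intros H; f_equal; apply functional_extensionality; auto. Qed.

Lemma Ival_scal c f a b : cont f -> Ival (fun x => c * f x) a b = c * Ival f a b.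
Proof.
  intros Hf. rewrite <- (Ival_ext (fun x => 0 + c * f x)) by (intro; ring).
  rewrite Ival_lin, Ival_const by (auto using cont_const). ring.
Qed.

Lemma Ival_sub f g a b : cont f -> cont g ->
  Ival (fun x => f x - g x) a b = Ival f a b - Ival g a b.
Proof.
  intros Hf Hg. rewrite <- (Ival_ext (fun x => f x + (-1) * g x)) by (intro; ring).
  rewrite Ival_lin by auto. ring.
Qed.

Lemma Ival_nonneg f a b : a <= b -> cont f -> (forall x, a <= x <= b -> 0 <= f x) ->
  0 <= Ival f a b.
Proof.
  intros Hab Hf H. replace 0 with (Ival (fun _ => 0) a b).
  - apply Ival_mono; auto using cont_const.
  - rewrite Ival_const; ring.
Qed.

Lemma Ival_abs_le f g a b : a <= b -> cont f -> cont g ->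
  (forall x, a <= x <= b -> Rabs (f x) <= g x) -> Rabs (Ival f a b) <= Ival g a b.
Proof.
  intros Hab Hf Hg H. apply Rabs_le. split.
  - replace (- Ival g a b) with (-1 * Ival g a b) by ring.
    rewrite <- Ival_scal by auto. apply Ival_mono; auto.
    { intro; apply continuity_pt_mult; auto; apply cont_const. }
    intros x Hx; specialize (H x Hx); apply abs_le_inv in H; lra.
  - apply Ival_mono; auto. intros x Hx; specialize (H x Hx); apply abs_le_inv in H; lra.
Qed.

Section Core.
Variables (k lam w : R -> R) (K m A : R).
Hypotheses (ck : cont k) (clam : cont lam) (cw : cont w) (HK : 0 < K) (Hm : 0 <= m)
  (kpos : forall s, 0 <= s -> 0 < k s)
  (lamb : forall u, 0 <= u -> 0 <= lam u <= K)
  (intk : forall S, 0 <= S -> Ival k 0 S = K - lam S)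
  (lamlim : tends_at_infty lam 0)
  (Lamb : forall S, 0 <= S -> Ival lam 0 S <= m)
  (Lamlim : tends_at_infty (fun S => Ival lam 0 S) m)
  (wb : forall t, 0 <= t -> Rabs (w t) <= 1)
  (eqA : forall t, 0 <= t -> w t + Ival (fun s => lam (t - s) * w s) 0 t = A)
  (eqB : forall t, 0 < t -> derivable_pt_lim w t (-K * w t + Ival (fun s => k (t - s) * w s) 0 t)).

Let wd t := -K * w t + Ival (fun s => k (t - s) * w s) 0 t.

Lemma conv_k_bound t : 0 <= t -> Rabs (Ival (fun s => k (t - s) * w s) 0 t) <= K - lam t.
Proof.
  intros Ht. rewrite <- intk by auto.
  replace (Ival k 0 t) with (Ival (fun s => k (t - s)) 0 t).
  2:{ rewrite Ival_subst by auto. f_equal; ring. }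
  apply Ival_abs_le; auto; try cont_tac.
  intros s Hs. rewrite Rabs_mult. rewrite (Rabs_right (k (t - s))) by (left; apply kpos; lra).
  assert (0 < k (t - s)) by (apply kpos; lra). pose proof (wb s ltac:(lra)). nra.
Qed.

Lemma wd_bound t : 0 <= t -> Rabs (wd t) <= 2 * K.
Proof.
  intros Ht. unfold wd. eapply Rle_trans; [apply Rabs_triang|].
  rewrite Rabs_mult, Rabs_Ropp, (Rabs_right K) by lra.
  pose proof (wb t Ht). pose proof (conv_k_bound t Ht). pose proof (lamb t Ht). nra.
Qed.

Lemma lip x y : 0 < x -> x <= y -> Rabs (w y - w x) <= 2 * K * (y - x).
Proof.
  intros Hx Hxy. destruct Hxy as [Hxy| ->].
  - destruct (MVT_cor2 w wd x y Hxy) as [c [E Hc]].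
    { intros c Hc; apply eqB; lra. }
    rewrite E, Rabs_mult, (Rabs_right (y - x)) by lra.
    apply Rmult_le_compat_r; [lra|]. apply wd_bound; lra.
  - rewrite Rminus_diag, Rabs_R0; lra.
Qed.

Lemma core_limsup : exists M, -1 <= M <= 1 /\
  (forall e, 0 < e -> exists T, 0 <= T /\ forall t, T <= t -> w t < M + e) /\
  (forall e, 0 < e -> forall T, exists t, T <= t /\ 0 <= t /\ M - e < w t).
Proof.
  set (Ss := fun x => forall T, exists t, T <= t /\ 0 <= t /\ x <= w t).
  assert (Hb : bound Ss).
  { exists 1. intros x Hx. destruct (Hx 0) as [t [? [? ?]]].
    pose proof (wb t ltac:(lra)) as W. apply abs_le_inv in W; lra. }
  assert (Hn : exists x, Ss x).
  { exists (-1). intros T. exists (Rmax T 0). split; [apply Rmax_l|]. split; [apply Rmax_r|].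
    pose proof (wb (Rmax T 0) (Rmax_r _ _)) as W. apply abs_le_inv in W; lra. }
  destruct (completeness Ss Hb Hn) as [M [HM1 HM2]].
  exists M. split; [split|split].
  - apply HM1. intros T. exists (Rmax T 0). split; [apply Rmax_l|]. split; [apply Rmax_r|].
    pose proof (wb (Rmax T 0) (Rmax_r _ _)) as W. apply abs_le_inv in W; lra.
  - apply HM2. intros x Hx. destruct (Hx 0) as [t [? [? ?]]].
    pose proof (wb t ltac:(lra)) as W. apply abs_le_inv in W; lra.
  - intros e He. assert (NS : ~ Ss (M + e)).
    { intro H; specialize (HM1 _ H); lra. }
    unfold Ss in NS. apply not_all_ex_not in NS. destruct NS as [T HT].
    exists (Rmax T 0). split; [apply Rmax_r|]. intros t Ht.
    apply Rnot_le_lt. intro C. apply HT. exists t. split; [|split].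
    + eapply Rle_trans; [apply Rmax_l|exact Ht].
    + eapply Rle_trans; [apply Rmax_r|exact Ht].
    + exact C.
  - intros e He T.
    assert (NU : ~ is_upper_bound Ss (M - e)).
    { intro H; specialize (HM2 _ H); lra. }
    apply not_all_ex_not in NU. destruct NU as [x Hx].
    apply imply_to_and in Hx. destruct Hx as [Sx Hx].
    destruct (Sx T) as [t [? [? ?]]]. exists t. split; auto. split; auto. lra.
Qed.

Lemma core_est M : -1 <= M <= 1 ->
  (forall e, 0 < e -> exists T, 0 <= T /\ forall t, T <= t -> w t < M + e) ->
  (forall e, 0 < e -> forall T, exists t, T <= t /\ 0 <= t /\ M - e < w t) ->
  forall eta, 0 < eta -> M * (1 + m) <= A + eta.
Proof.
  intros HM Hi Hii eta Heta.
  destruct (Lamlim (eta/8) ltac:(lra)) as [S0 HS0].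
  set (S := Rmax 1 S0).
  assert (HS : 1 <= S) by apply Rmax_l.
  set (Lam := Ival lam 0 S).
  assert (HLam : 0 <= Lam).
  { apply Ival_nonneg; auto; try lra. intros; apply lamb; lra. }
  assert (Htau : m - Lam <= eta / 8).
  { specialize (HS0 S (Rmax_r _ _)). apply abs_lt_inv in HS0. unfold Lam; lra. }
  assert (HLm : Lam <= m) by (apply Lamb; lra).
  destruct (continuity_ab_min k 0 S) as [mn [Hmn Hmnb]]; [lra| intros; apply ck|].
  set (kap := k mn).
  assert (Hkap : 0 < kap) by (apply kpos; lra).
  destruct (lamlim (eta * kap / (12 * K))) as [S1 HS1].
  { apply Rdiv_lt_0_compat; nra. }
  set (S' := Rmax S S1).
  assert (HSS' : S <= S') by apply Rmax_l.
  set (lS := lam S').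
  assert (HlS : 0 <= lS <= eta * kap / (12 * K)).
  { specialize (HS1 S' (Rmax_r _ _)). rewrite Rminus_0_r in HS1. apply abs_lt_inv in HS1.
    pose proof (lamb S' ltac:(lra)). unfold lS; lra. }
  set (h := eta / (8 * (K + K * K * K / kap))).
  assert (Hq : 0 < K + K * K * K / kap).
  { assert (0 < K * K * K / kap) by (apply Rdiv_lt_0_compat; [repeat apply Rmult_lt_0_compat|]; lra). lra. }
  assert (Hh : 0 < h) by (apply Rdiv_lt_0_compat; lra).
  set (Q := 1 + 2 * K * K / kap + 2 * K / (kap * h)).
  assert (HQ : 0 < Q).
  { assert (0 < 2 * K * K / kap) by (apply Rdiv_lt_0_compat; [nra|lra]).
    assert (0 < 2 * K / (kap * h)) by (apply Rdiv_lt_0_compat; [nra|nra]). unfold Q; lra. }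
  set (e := Rmin 1 (eta / (4 * Q))).
  assert (He : 0 < e) by (apply Rmin_pos; [lra| apply Rdiv_lt_0_compat; lra]).
  assert (He1 : e <= 1) by apply Rmin_l.
  assert (HeQ : e * Q <= eta / 4).
  { apply Rle_trans with (eta / (4 * Q) * Q).
    - apply Rmult_le_compat_r; [lra| apply Rmin_r].
    - right; field; lra. }
  destruct (Hi e He) as [T [HT0 HT]].
  destruct (Hii e He (T + S' + h + 1)) as [t0 [Ht0 [_ Hwt0]]].
  destruct (MVT_cor2 w wd (t0 - h) t0) as [t [Emvt Ht]]; [lra| intros; apply eqB; lra|].
  assert (HtT : T + S' + 1 <= t) by lra.
  assert (Hwd : wd t >= - (2 * e / h)).
  { assert (w (t0 - h) < M + e) by (apply HT; lra).
    replace (t0 - (t0 - h)) with h in Emvt by ring.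
    apply Rle_ge. apply Rmult_le_reg_r with h; [lra|].
    replace (- (2 * e / h) * h) with (- 2 * e) by (field; lra). lra. }
  assert (Hwlow : M - e - 2 * K * h <= w t).
  { pose proof (lip t t0 ltac:(lra) ltac:(lra)) as L. apply abs_le_inv in L. nra. }
  assert (Hwup : w t < M + e) by (apply HT; lra).
  set (I := Ival (fun s => k (t - s) * w s) 0 t).
  assert (HI : wd t = - K * w t + I) by reflexivity.
  set (I1 := Ival (fun s => k (t - s) * w s) 0 (t - S')).
  set (I2 := Ival (fun s => k (t - s) * w s) (t - S') t).
  assert (HI12 : I1 + I2 = I) by (apply Ival_chasles; cont_tac).
  assert (HI1 : Rabs I1 <= lS).
  { eapply Rle_trans. apply (Ival_abs_le _ (fun s => k (t - s))); try lra; try cont_tac.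
    - intros s Hs. rewrite Rabs_mult. rewrite (Rabs_right (k (t - s))) by (left; apply kpos; lra).
      assert (0 < k (t - s)) by (apply kpos; lra). pose proof (wb s ltac:(lra)). nra.
    - rewrite Ival_subst by auto. replace (t - (t - S')) with S' by ring. rewrite Rminus_0_r.
      replace (Ival k S' t) with (Ival k 0 t - Ival k 0 S') by (rewrite <- (Ival_chasles k 0 S' t) by auto; ring).
      rewrite !intk by lra.
      pose proof (lamb t ltac:(lra)). unfold lS. lra. }
  set (g1 := fun s => k (t - s) * (M + e - w s)).
  assert (cg1 : cont g1) by (unfold g1; cont_tac).
  set (D := Ival g1 (t - S') t).
  assert (HD : D = (M + e) * (K - lS) - I2).
  { unfold D, I2. rewrite (Ival_ext g1 (fun s => (M + e) * k (t - s) - k (t - s) * w s))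
      by (intro; unfold g1; ring).
    rewrite Ival_sub by cont_tac. rewrite Ival_scal by cont_tac.
    rewrite Ival_subst by auto. replace (t - t) with 0 by ring. replace (t - (t - S')) with S' by ring.
    rewrite intk by lra. reflexivity. }
  set (E := Ival (fun s => M + e - w s) (t - S) t).
  assert (HE : kap * E <= D).
  { unfold D. rewrite <- (Ival_chasles g1 (t - S') (t - S) t) by auto.
    assert (0 <= Ival g1 (t - S') (t - S)).
    { apply Ival_nonneg; auto; try lra. intros s Hs. unfold g1.
      assert (0 < k (t - s)) by (apply kpos; lra). assert (w s < M + e) by (apply HT; lra). nra. }
    assert (kap * E <= Ival g1 (t - S) t).
    { unfold E. rewrite <- Ival_scal by cont_tac. apply Ival_mono; try lra; try cont_tac.
      intros s Hs. unfold g1. assert (kap <= k (t - s)) by (apply Hmn; lra).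
      assert (w s < M + e) by (apply HT; lra). nra. }
    lra. }
  set (J1 := Ival (fun s => lam (t - s) * w s) 0 (t - S)).
  set (J2 := Ival (fun s => lam (t - s) * w s) (t - S) t).
  assert (HA : w t + (J1 + J2) = A).
  { unfold J1, J2. rewrite Ival_chasles by cont_tac. apply eqA; lra. }
  assert (HJ1 : Rabs J1 <= m - Lam).
  { eapply Rle_trans. apply (Ival_abs_le _ (fun s => lam (t - s))); try lra; try cont_tac.
    - intros s Hs. rewrite Rabs_mult. pose proof (lamb (t - s) ltac:(lra)).
      rewrite (Rabs_right (lam (t - s))) by lra. pose proof (wb s ltac:(lra)). nra.
    - rewrite Ival_subst by auto. replace (t - (t - S)) with S by ring. rewrite Rminus_0_r.
      replace (Ival lam S t) with (Ival lam 0 t - Ival lam 0 S) by (rewrite <- (Ival_chasles lam 0 S t) by auto; ring).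
      fold Lam.
      pose proof (Lamb t ltac:(lra)). lra. }
  set (F := Ival (fun s => lam (t - s) * (M + e - w s)) (t - S) t).
  assert (HJ2 : J2 = (M + e) * Lam - F).
  { unfold J2, F. rewrite (Ival_ext (fun s => lam (t - s) * (M + e - w s))
         (fun s => (M + e) * lam (t - s) - lam (t - s) * w s)) by (intro; ring).
    rewrite Ival_sub by cont_tac. rewrite Ival_scal by cont_tac.
    rewrite Ival_subst by auto. replace (t - t) with 0 by ring. replace (t - (t - S)) with S by ring.
    fold Lam. ring. }
  assert (HF : F <= K * E).
  { unfold F, E. rewrite <- Ival_scal by cont_tac. apply Ival_mono; try lra; try cont_tac.
    intros s Hs. pose proof (lamb (t - s) ltac:(lra)). assert (w s < M + e) by (apply HT; lra). nra. }
  assert (HDb : D <= 2 * K * e + 2 * e / h + 2 * K * K * h + 2 * lS).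
  { rewrite HD. apply abs_le_inv in HI1.
    assert (I2 = wd t + K * w t - I1) by lra.
    assert (- (2 * e / h) <= wd t) by lra.
    assert (- (M + e) * lS <= lS) by nra.
    nra. }
  assert (HKE : K * E <= e * (K / kap * (2 * K + 2 / h)) + 2 * K * K * K * h / kap + 2 * K * lS / kap).
  { apply Rle_trans with (K * ((2 * K * e + 2 * e / h + 2 * K * K * h + 2 * lS) / kap)).
    - apply Rmult_le_compat_l; [lra|]. apply Rmult_le_reg_l with kap; [lra|].
      replace (kap * ((2 * K * e + 2 * e / h + 2 * K * K * h + 2 * lS) / kap))
        with (2 * K * e + 2 * e / h + 2 * K * K * h + 2 * lS) by (field; lra). lra.
    - right; field; lra. }
  assert (Hb1 : e + e * (K / kap * (2 * K + 2 / h)) = e * Q) by (unfold Q; field; lra).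
  assert (Hb2 : 2 * K * h + 2 * K * K * K * h / kap = eta / 4).
  { replace (2 * K * h + 2 * K * K * K * h / kap) with (2 * h * (K + K * K * K / kap)) by (field; lra).
    unfold h. field. split; [lra|]. assert (0 < K * kap) by nra. assert (0 < K * K * K) by (repeat apply Rmult_lt_0_compat; lra). lra. }
  assert (Hb3 : 2 * K * lS / kap <= eta / 6).
  { apply Rle_trans with (2 * K * (eta * kap / (12 * K)) / kap).
    - unfold Rdiv. apply Rmult_le_compat_r. left; apply Rinv_0_lt_compat; lra.
      apply Rmult_le_compat_l; lra.
    - right; field; lra. }
  apply abs_le_inv in HJ1.
  assert (M * Lam >= M * m - (m - Lam)) by nra.
  assert (e * Lam >= 0) by nra.
  nra.
Qed.

Lemma core_upper : forall d, 0 < d -> exists T, forall t, T <= t -> w t <= A / (1 + m) + d.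
Proof.
  intros d Hd. destruct core_limsup as [M [HM [Hi Hii]]].
  assert (HMA : M * (1 + m) <= A).
  { apply Rnot_lt_le. intro C.
    pose proof (core_est M HM Hi Hii ((M * (1 + m) - A) / 2) ltac:(lra)). lra. }
  assert (HMc : M <= A / (1 + m)).
  { apply Rmult_le_reg_r with (1 + m); [lra|]. unfold Rdiv; rewrite Rmult_assoc, Rinv_l by lra. lra. }
  destruct (Hi d Hd) as [T [_ HT]]. exists T. intros t Ht. specialize (HT t Ht). lra.
Qed.

End Core.

Lemma ext_cont f : continuous_on_nonneg f -> cont (fun x => f (Rmax 0 x)).
Proof.
  intros Hf x eps Heps.
  destruct (Hf (Rmax 0 x) (Rmax_l _ _) eps Heps) as [d [Hd H]].
  exists d. split; [exact Hd|]. intros y [_ Hy].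
  apply H. split; [apply Rmax_l|]. simpl in *. unfold Rdist in *.
  eapply Rle_lt_trans; [|exact Hy].
  unfold Rmax; destruct (Rle_dec 0 y); destruct (Rle_dec 0 x); apply Rabs_le;
  unfold Rabs; destruct (Rcase_abs (y - x)); lra.
Qed.

Lemma RInt_Ival f f0 a b v : a <= b -> cont f0 -> (forall x, a <= x <= b -> f x = f0 x) ->
  RInt_eq f a b v -> v = Ival f0 a b.
Proof.
  intros Hab Hc Heq [pr Hpr]. rewrite <- Hpr. apply Ival_RInt; auto.
Qed.

Lemma Ival_RInt_eq f f0 a b : a <= b -> cont f0 -> (forall x, a <= x <= b -> f x = f0 x) ->
  RInt_eq f a b (Ival f0 a b).
Proof.
  intros Hab Hc Heq.
  assert (pr : Riemann_integrable f a b).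
  { refine (@Riemann_integrable_ext f0 f a b _ (RI_cont f0 a b Hc)). intros x Hx; symmetry; apply Heq.
    rewrite Rmin_left, Rmax_right in Hx; auto. }
  exists pr. apply Ival_RInt; auto.
Qed.

Lemma deriv_local f g x l d : 0 < d -> (forall y, Rabs (y - x) < d -> f y = g y) ->
  derivable_pt_lim f x l -> derivable_pt_lim g x l.
Proof.
  intros Hd Heq H eps Heps. destruct (H eps Heps) as [d1 Hd1].
  assert (Hm : 0 < Rmin d d1) by (apply Rmin_pos; [lra| apply cond_pos]).
  exists (mkposreal _ Hm). intros h Hh0 Hh. simpl in Hh.
  rewrite <- !Heq.
  - apply Hd1; auto. eapply Rlt_le_trans; [exact Hh| apply Rmin_r].
  - unfold Rminus; rewrite Rplus_opp_r, Rabs_R0; lra.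
  - replace (x + h - x) with h by ring. eapply Rlt_le_trans; [exact Hh| apply Rmin_l].
Qed.

Lemma deriv_sign f x d c : derivable_pt_lim f x d -> d <> 0 -> 0 < c ->
  exists h, 0 < h < c /\ (f (x - h) - f x) * d < 0.
Proof.
  intros H Hd Hc. assert (Hda : 0 < Rabs d / 2) by (apply Rdiv_lt_0_compat; [apply Rabs_pos_lt; auto| lra]).
  destruct (H _ Hda) as [del Hdel].
  set (h := Rmin c del / 2).
  assert (Hh : 0 < h) by (unfold h; apply Rdiv_lt_0_compat; [apply Rmin_pos; [lra|apply cond_pos]| lra]).
  assert (Hhc : h < c) by (unfold h; pose proof (Rmin_l c del); lra).
  assert (Hhd : h < del) by (unfold h; pose proof (Rmin_r c del); pose proof (cond_pos del); lra).
  exists h. split; [lra|].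
  specialize (Hdel (- h) ltac:(lra)). rewrite Rabs_Ropp, (Rabs_right h) in Hdel by lra.
  specialize (Hdel Hhd). replace (x + - h) with (x - h) in Hdel by ring.
  apply abs_lt_inv in Hdel.
  set (q := (f (x - h) - f x) / - h) in Hdel.
  assert (E : f (x - h) - f x = - h * q) by (unfold q; field; lra).
  rewrite E. assert (0 < q * d).
  { unfold Rabs in Hdel; destruct (Rcase_abs d); nra. }
  nra.
Qed.

Lemma pow2_ge n : INR n <= 2 ^ n.
Proof.
  induction n.
  - simpl; lra.
  - rewrite S_INR. simpl. pose proof (pow_R1_Rle 2 n ltac:(lra)). lra.
Qed.

Lemma pow2_big t S : 0 < t -> exists n, S <= 2 ^ n * t.
Proof.
  intros Ht. destruct (INR_unbounded (S / t)) as [n Hn]. exists n.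
  pose proof (pow2_ge n).
  apply Rle_trans with (S / t * t). right; field; lra.
  apply Rmult_le_compat_r; lra.
Qed.

Section Main.
Variables (k L r : R -> R) (alpha a : R).
Hypotheses (Hkc : continuous_on_nonneg k) (Hkp : forall t, 0 <= t -> 0 < k t)
  (HK : improper_int k 0 (- a)) (Hal : 1 < alpha) (HL : slowly_varying L)
  (Hlam : forall t, 0 < t -> improper_int k t (L t * Rpower t (- alpha)))
  (Hrc : continuous_on_nonneg r) (Hr0 : r 0 = 1)
  (HB : forall t, 0 < t -> exists v,
      RInt_eq (fun s => k (t - s) * r s) 0 t v /\
      derivable_pt_lim r t (a * r t + v)).

Let K := - a.
Let k0 := fun x => k (Rmax 0 x).
Let r0 := fun x => r (Rmax 0 x).
Let lam := fun u => K - Ival k0 0 u.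

Lemma ck0 : cont k0. Proof. apply ext_cont; auto. Qed.
Lemma cr0 : cont r0. Proof. apply ext_cont; auto. Qed.
Lemma clam : cont lam.
Proof. unfold lam. apply cont_minus. apply cont_const. apply cont_Ival, ck0. Qed.

Lemma k0_eq x : 0 <= x -> k0 x = k x.
Proof. intros; unfold k0; rewrite Rmax_right; auto. Qed.
Lemma r0_eq x : 0 <= x -> r0 x = r x.
Proof. intros; unfold r0; rewrite Rmax_right; auto. Qed.
Lemma k0pos x : 0 <= x -> 0 < k0 x.
Proof. intros; rewrite k0_eq; auto. Qed.

Lemma intk_lim : tends_at_infty (fun T => Ival k0 0 T) K.
Proof.
  intros eps Heps. destruct HK as [H1 H2]. destruct (H2 eps Heps) as [M HM].
  exists (Rmax M 0). intros t Ht.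
  apply (HM t); [eapply Rle_trans; [apply Rmax_l|exact Ht]| eapply Rle_trans; [apply Rmax_r|exact Ht]|].
  apply Ival_RInt_eq; [eapply Rle_trans; [apply Rmax_r|exact Ht]| apply ck0|].
  intros; symmetry; apply k0_eq; lra.
Qed.

Lemma lim_unique f l1 l2 : tends_at_infty f l1 -> tends_at_infty f l2 -> l1 = l2.
Proof.
  intros H1 H2. apply Rminus_diag_uniq. destruct (Req_dec (l1 - l2) 0) as [E|E]; auto. exfalso.
  pose proof (Rabs_pos_lt _ E).
  enough (Rabs (l1 - l2) <= 0) by lra. apply le_epsilon. intros e He. rewrite Rplus_0_l.
  destruct (H1 (e/2) ltac:(lra)) as [M1 HM1]. destruct (H2 (e/2) ltac:(lra)) as [M2 HM2].
  specialize (HM1 (Rmax M1 M2) (Rmax_l _ _)). specialize (HM2 (Rmax M1 M2) (Rmax_r _ _)).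
  replace (l1 - l2) with (- (f (Rmax M1 M2) - l1) + (f (Rmax M1 M2) - l2)) by ring.
  eapply Rle_trans; [apply Rabs_triang|]. rewrite Rabs_Ropp. lra.
Qed.

Lemma lam_eq t : 0 < t -> lam t = L t * Rpower t (- alpha).
Proof.
  intros Ht. apply (lim_unique (fun T => Ival k0 0 T - Ival k0 0 t)).
  - intros eps Heps. destruct (intk_lim eps Heps) as [M HM]. exists M. intros T HT.
    unfold lam. replace (Ival k0 0 T - Ival k0 0 t - (K - Ival k0 0 t)) with (Ival k0 0 T - K) by ring.
    auto.
  - intros eps Heps. destruct (Hlam t Ht) as [_ H2]. destruct (H2 eps Heps) as [M HM].
    exists (Rmax M t). intros T HT.
    replace (Ival k0 0 T - Ival k0 0 t) with (Ival k0 t T)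
      by (rewrite <- (Ival_chasles k0 0 t T) by apply ck0; ring).
    apply (HM T); [eapply Rle_trans; [apply Rmax_l|exact HT]| eapply Rle_trans; [apply Rmax_r|exact HT]|].
    apply Ival_RInt_eq; [eapply Rle_trans; [apply Rmax_r|exact HT]| apply ck0|].
    intros; symmetry; apply k0_eq; lra.
Qed.

Lemma lam_pos t : 0 < t -> 0 < lam t.
Proof.
  intros Ht. rewrite lam_eq by auto. apply Rmult_lt_0_compat.
  - destruct HL as [H _]. apply H; lra.
  - unfold Rpower; apply exp_pos.
Qed.

Lemma lam0 : lam 0 = K.
Proof. unfold lam. rewrite Ival_refl by apply ck0. ring. Qed.

Lemma lam_decr u v : 0 <= u -> u <= v -> lam v <= lam u.
Proof.
  intros Hu Huv. unfold lam. rewrite <- (Ival_chasles k0 0 u v) by apply ck0.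
  assert (0 <= Ival k0 u v) by (apply Ival_nonneg; auto; [apply ck0| intros; left; apply k0pos; lra]).
  lra.
Qed.

Lemma Kpos : 0 < K.
Proof.
  pose proof (lam_pos 1 ltac:(lra)). pose proof (lam_decr 0 1 ltac:(lra) ltac:(lra)). rewrite lam0 in H0. lra.
Qed.

Lemma lamb u : 0 <= u -> 0 <= lam u <= K.
Proof.
  intros Hu. split.
  - destruct (Req_dec u 0) as [->|]. rewrite lam0; pose proof Kpos; lra. left; apply lam_pos; lra.
  - rewrite <- lam0. apply lam_decr; lra.
Qed.

Lemma lamlim : tends_at_infty lam 0.
Proof.
  intros eps Heps. destruct (intk_lim eps Heps) as [M HM]. exists M. intros t Ht.
  unfold lam. replace (K - Ival k0 0 t - 0) with (- (Ival k0 0 t - K)) by ring.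
  rewrite Rabs_Ropp; auto.
Qed.

Lemma lam_deriv x : derivable_pt_lim lam x (- k0 x).
Proof.
  unfold lam. replace (- k0 x) with (0 - k0 x) by ring.
  apply (derivable_pt_lim_minus (fun _ => K) (fun u => Ival k0 0 u)).
  apply derivable_pt_lim_const. apply FTC, ck0.
Qed.

Lemma lam_ratio : exists t1 q, 1 <= t1 /\ 0 < q < / 2 /\ forall t, t1 <= t -> lam (2 * t) <= q * lam t.
Proof.
  set (p := Rpower 2 (- alpha)).
  assert (Hp0 : 0 < p) by (unfold p, Rpower; apply exp_pos).
  assert (Hp : p < / 2).
  { unfold p. replace (/ 2) with (Rpower 2 (- (1))).
    - apply Rpower_lt; lra.
    - rewrite Rpower_Ropp, Rpower_1; lra. }
  set (q := (p + / 2) / 2).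
  set (eta := q / p - 1).
  assert (Heta : 0 < eta).
  { unfold eta, q. apply Rlt_Rminus. apply Rmult_lt_reg_r with p; auto.
    unfold Rdiv at 1. rewrite Rmult_assoc, Rinv_l, Rmult_1_r by lra. lra. }
  destruct HL as [HLp HLv].
  destruct (HLv 2 ltac:(lra) eta Heta) as [t0 Ht0].
  exists (Rmax 1 t0), q. split; [apply Rmax_l|]. split; [unfold q; lra|].
  intros t Ht. assert (Ht1 : 1 <= t) by (eapply Rle_trans; [apply Rmax_l|exact Ht]).
  specialize (Ht0 t ltac:(eapply Rle_trans; [apply Rmax_r|exact Ht])).
  apply abs_lt_inv in Ht0.
  assert (HLt : 0 < L t) by (apply HLp; lra).
  assert (HL2 : L (2 * t) < (q / p) * L t).
  { assert (L (2 * t) / L t < q / p) by (unfold eta in Ht0; lra).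
    apply Rmult_lt_reg_r with (/ L t). apply Rinv_0_lt_compat; auto.
    rewrite Rmult_assoc, Rinv_r, Rmult_1_r by lra. exact H. }
  rewrite !lam_eq by lra.
  rewrite <- (Rpower_mult_distr 2 t) by lra. fold p.
  assert (0 < Rpower t (- alpha)) by (unfold Rpower; apply exp_pos).
  replace (q * (L t * Rpower t (- alpha))) with ((q / p) * L t * (p * Rpower t (- alpha))) by (field; lra).
  left. apply Rmult_lt_compat_r; [nra|]. auto.
Qed.

Lemma Lam_mono u v : 0 <= u -> u <= v -> Ival lam 0 u <= Ival lam 0 v.
Proof.
  intros Hu Huv. rewrite <- (Ival_chasles lam 0 u v) by apply clam.
  assert (0 <= Ival lam u v) by (apply Ival_nonneg; auto; [apply clam| intros; apply lamb; lra]).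
  lra.
Qed.

Lemma Lam_step u v : 0 <= u -> u <= v -> Ival lam u v <= lam u * (v - u).
Proof.
  intros Hu Huv. rewrite <- Ival_const. apply Ival_mono; auto. apply clam. apply cont_const.
  intros x Hx; apply lam_decr; lra.
Qed.

Lemma Lam_bounded : exists C, forall S, 0 <= S -> Ival lam 0 S <= C.
Proof.
  destruct lam_ratio as [t1 [q [Ht1 [Hq Hr]]]].
  set (x := 2 * q).
  assert (Hx : 0 < x < 1) by (unfold x; lra).
  assert (P : forall n, Ival lam 0 (2 ^ n * t1) <= Ival lam 0 t1 + t1 * lam t1 * ((1 - x ^ n) / (1 - x))
                        /\ lam (2 ^ n * t1) <= q ^ n * lam t1).
  { induction n as [|n [IH1 IH2]].
    - simpl. rewrite Rmult_1_l. split; [|lra]. replace ((1 - 1) / (1 - x)) with 0 by (field; lra). lra.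
    - assert (H2n : 1 <= 2 ^ n) by (apply pow_R1_Rle; lra).
      assert (Hu : t1 <= 2 ^ n * t1) by nra.
      replace (2 ^ S n * t1) with (2 * (2 ^ n * t1)) by (simpl; ring).
      split.
      + rewrite <- (Ival_chasles lam 0 (2 ^ n * t1) (2 * (2 ^ n * t1))) by apply clam.
        pose proof (Lam_step (2 ^ n * t1) (2 * (2 ^ n * t1)) ltac:(lra) ltac:(lra)).
        pose proof (lamb t1 ltac:(lra)).
        assert (lam (2 ^ n * t1) * (2 * (2 ^ n * t1) - 2 ^ n * t1) <= t1 * lam t1 * x ^ n).
        { unfold x. rewrite Rpow_mult_distr.
          replace (2 * (2 ^ n * t1) - 2 ^ n * t1) with (2 ^ n * t1) by ring.
          assert (0 <= 2 ^ n * t1) by lra.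
          apply Rle_trans with (q ^ n * lam t1 * (2 ^ n * t1)).
          apply Rmult_le_compat_r; lra. right; ring. }
        assert (E : (1 - x ^ n) / (1 - x) + x ^ n = (1 - x ^ S n) / (1 - x)) by (simpl; field; lra).
        rewrite <- E. nra.
      + eapply Rle_trans; [apply Hr; lra|]. simpl.
        pose proof (pow_le q n ltac:(lra)). nra. }
  exists (Ival lam 0 t1 + t1 * lam t1 / (1 - x)). intros S HS.
  destruct (pow2_big t1 S ltac:(lra)) as [n Hn].
  destruct (P n) as [P1 _].
  eapply Rle_trans; [apply Lam_mono; eauto|]. eapply Rle_trans; [exact P1|].
  pose proof (lamb t1 ltac:(lra)). pose proof (pow_le x n ltac:(lra)).
  apply Rplus_le_compat_l. unfold Rdiv. assert (0 < / (1 - x)) by (apply Rinv_0_lt_compat; lra).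
  assert (0 <= t1 * lam t1) by nra. assert (0 <= t1 * lam t1 * / (1 - x) * x ^ n) by (repeat apply Rmult_le_pos; lra).
  nra.
Qed.

Lemma Lam_lim_ex : exists m, 0 <= m /\ (forall S, 0 <= S -> Ival lam 0 S <= m) /\
   tends_at_infty (fun S => Ival lam 0 S) m.
Proof.
  destruct Lam_bounded as [C HC].
  set (E := fun x => exists S, 0 <= S /\ x = Ival lam 0 S).
  assert (Hb : bound E) by (exists C; intros x [S [HS ->]]; auto).
  assert (Hn : exists x, E x) by (exists (Ival lam 0 0); exists 0; split; [lra|auto]).
  destruct (completeness E Hb Hn) as [m [H1 H2]].
  assert (Hup : forall S, 0 <= S -> Ival lam 0 S <= m) by (intros S HS; apply H1; exists S; auto).
  exists m. split; [|split; auto].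
  - eapply Rle_trans; [|apply (Hup 0); lra]. rewrite Ival_refl by apply clam; lra.
  - intros eps Heps.
    assert (NU : ~ is_upper_bound E (m - eps)) by (intro H; specialize (H2 _ H); lra).
    apply not_all_ex_not in NU. destruct NU as [x Hx]. apply imply_to_and in Hx.
    destruct Hx as [[S [HS ->]] Hx].
    exists S. intros t Ht. pose proof (Lam_mono S t HS Ht). pose proof (Hup t ltac:(lra)).
    apply abs_lt; lra.
Qed.

Lemma deriv_eq_val f x l l' : derivable_pt_lim f x l -> l = l' -> derivable_pt_lim f x l'.
Proof. intros H <-; exact H. Qed.

Lemma conv_bound phi t R : cont phi -> 0 <= t -> (forall s, 0 <= s <= t -> Rabs (phi s) <= R) ->
  Rabs (Ival (fun s => k0 (t - s) * phi s) 0 t) <= R * (K - lam t).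
Proof.
  intros Hphi Ht HR. eapply Rle_trans.
  - apply (Ival_abs_le _ (fun s => R * k0 (t - s))); auto.
    + pose proof ck0; cont_tac.
    + pose proof ck0; cont_tac.
    + intros s Hs. rewrite Rabs_mult, Rmult_comm. rewrite (Rabs_right (k0 (t - s))) by (left; apply k0pos; lra).
      apply Rmult_le_compat_r; [left; apply k0pos; lra| auto].
  - rewrite Ival_scal by (apply cont_comp_aff, ck0). rewrite Ival_subst by apply ck0.
    replace (t - t) with 0 by ring. rewrite Rminus_0_r. unfold lam. right; ring.
Qed.

Lemma eqB_r0 t : 0 < t -> derivable_pt_lim r0 t (- K * r0 t + Ival (fun s => k0 (t - s) * r0 s) 0 t).
Proof.
  intros Ht. destruct (HB t Ht) as [v [Hv Hd]].
  assert (Ev : v = Ival (fun s => k0 (t - s) * r0 s) 0 t).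
  { refine (RInt_Ival (fun s => k (t - s) * r s) _ 0 t v _ _ _ Hv); [lra| |].
    - pose proof ck0; pose proof cr0; cont_tac.
    - intros x Hx. rewrite k0_eq, r0_eq by lra. reflexivity. }
  rewrite <- Ev. rewrite r0_eq by lra.
  replace (- K * r t + v) with (a * r t + v) by (unfold K; ring).
  apply (deriv_local r r0 t _ t); auto.
  intros y Hy. apply abs_lt_inv in Hy. rewrite r0_eq by lra. reflexivity.
Qed.

Lemma r0_bound t : 0 <= t -> Rabs (r0 t) <= 1.
Proof.
  intros Ht.
  destruct (continuity_ab_maj (fun x => Rabs (r0 x)) 0 t Ht) as [ts [Hmax Hts]].
  { intros; apply cont_abs, cr0. }
  simpl in Hmax. eapply Rle_trans; [apply Hmax; lra|].
  set (R := Rabs (r0 ts)).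
  apply Rnot_lt_le. intro HR.
  assert (Hts0 : 0 < ts).
  { destruct Hts as [[H|H] _]; auto. subst ts. unfold R in HR. rewrite r0_eq, Hr0, Rabs_R1 in HR; lra. }
  assert (HI : Rabs (Ival (fun s => k0 (ts - s) * r0 s) 0 ts) <= R * (K - lam ts)).
  { apply conv_bound; [apply cr0| lra|]. intros; apply Hmax; lra. }
  pose proof (lam_pos ts Hts0) as Hl. pose proof (lamb ts ltac:(lra)) as Hlb.
  set (I := Ival (fun s => k0 (ts - s) * r0 s) 0 ts) in HI.
  apply abs_le_inv in HI.
  pose proof (eqB_r0 ts Hts0) as Hd. fold I in Hd.
  pose proof Kpos.
  destruct (Rle_dec 0 (r0 ts)) as [Hp|Hn].
  - assert (ER : R = r0 ts) by (unfold R; rewrite Rabs_right; lra).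
    assert (Hneg : - K * r0 ts + I < 0) by nra.
    destruct (deriv_sign r0 ts _ ts Hd ltac:(lra) Hts0) as [h [Hh Hs]].
    assert (r0 (ts - h) - r0 ts > 0) by nra.
    pose proof (Hmax (ts - h) ltac:(lra)) as M1. simpl in M1.
    pose proof (Rle_abs (r0 (ts - h))) as M2. fold R in M1. lra.
  - assert (ER : R = - r0 ts) by (unfold R; rewrite Rabs_left; lra).
    assert (Hpos : - K * r0 ts + I > 0) by nra.
    destruct (deriv_sign r0 ts _ ts Hd ltac:(lra) Hts0) as [h [Hh Hs]].
    assert (r0 (ts - h) - r0 ts < 0) by nra.
    pose proof (Hmax (ts - h) ltac:(lra)) as M1. simpl in M1.
    pose proof (Rle_abs (- r0 (ts - h))) as M2. rewrite Rabs_Ropp in M2. fold R in M1. lra.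
Qed.

Lemma eqA_r0 t : 0 <= t -> r0 t + Ival (fun s => lam (t - s) * r0 s) 0 t = 1.
Proof.
  intros Ht.
  set (G := fun t => r0 t + Ival (fun s => lam (t - s) * r0 s) 0 t).
  assert (HL' : forall x, derivable_pt_lim (fun t => Ival (fun s => lam (t - s) * r0 s) 0 t) x
       (lam 0 * r0 x + Ival (fun s => - k0 (x - s) * r0 s) 0 x)).
  { intro x. apply (leibniz lam (fun u => - k0 u) r0); auto using lam_deriv.
    apply cont_opp, ck0. apply cr0. }
  assert (E : G t = G 0).
  { apply const_deriv; auto.
    - intros x _. unfold G. apply continuity_pt_plus. apply cr0.
      apply derivable_continuous_pt. eexists; apply HL'.
    - intros x Hx. unfold G.
      apply (deriv_eq_val _ _ ((- K * r0 x + Ival (fun s => k0 (x - s) * r0 s) 0 x) +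
                      (lam 0 * r0 x + Ival (fun s => - k0 (x - s) * r0 s) 0 x))).
      + apply (derivable_pt_lim_plus r0 (fun t => Ival (fun s => lam (t - s) * r0 s) 0 t)).
        apply eqB_r0; lra. apply HL'.
      + rewrite (Ival_ext (fun s => - k0 (x - s) * r0 s) (fun s => -1 * (k0 (x - s) * r0 s))) by (intro; ring).
        rewrite Ival_scal by (pose proof ck0; pose proof cr0; cont_tac).
        rewrite lam0. ring. }
  unfold G in E. cbv beta in E. rewrite Ival_refl in E by (pose proof clam; pose proof cr0; cont_tac).
  rewrite (r0_eq 0), Hr0 in E by lra. lra.
Qed.

Lemma ibp T : Ival (fun s => s * k0 s) 0 T = Ival lam 0 T - T * lam T.
Proof.
  set (H := fun T => Ival (fun s => s * k0 s) 0 T - Ival lam 0 T + T * lam T).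
  assert (E : H T = H 0).
  { apply const_deriv_all. intro x. unfold H.
    apply (deriv_eq_val _ _ (x * k0 x - lam x + (1 * lam x + x * - k0 x))); [|ring].
    apply (derivable_pt_lim_plus (fun T => Ival (fun s => s * k0 s) 0 T - Ival lam 0 T) (fun T => T * lam T)).
    - apply (derivable_pt_lim_minus (fun T => Ival (fun s => s * k0 s) 0 T) (fun T => Ival lam 0 T)).
      + apply (FTC (fun s => s * k0 s)). pose proof ck0; cont_tac.
      + apply FTC, clam.
    - apply (derivable_pt_lim_mult (fun T => T) lam). apply derivable_pt_lim_id. apply lam_deriv. }
  unfold H in E. rewrite !Ival_refl in E by (pose proof ck0; pose proof clam; cont_tac). lra.
Qed.

Lemma main_concl : exists m, improper_int (fun s => s * k s) 0 m /\ tends_at_infty r (/ (1 + m)).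
Proof.
  destruct Lam_lim_ex as [m [Hm [Lamb Lamlim]]].
  exists m.
  assert (Tlam : forall eps, 0 < eps -> exists M, 0 <= M /\ forall T, M <= T -> T * lam T < eps).
  { intros eps Heps. destruct (Lamlim (eps / 2) ltac:(lra)) as [S0 HS0].
    exists (Rmax 0 (2 * S0)). split; [apply Rmax_l|]. intros T HT.
    assert (HT0 : 0 <= T) by (eapply Rle_trans; [apply Rmax_l|exact HT]).
    assert (HT1 : 2 * S0 <= T) by (eapply Rle_trans; [apply Rmax_r|exact HT]).
    specialize (HS0 (T / 2) ltac:(lra)). apply abs_lt_inv in HS0.
    pose proof (Lamb T HT0).
    assert (lam T * (T - T / 2) <= Ival lam (T / 2) T).
    { rewrite <- Ival_const. apply Ival_mono; [lra| apply cont_const| apply clam|].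
      intros; apply lam_decr; lra. }
    rewrite <- (Ival_chasles lam 0 (T / 2) T) in H by apply clam.
    lra. }
  split.
  - split.
    + intros T HT. exists (Ival (fun s => s * k0 s) 0 T). apply Ival_RInt_eq; auto.
      pose proof ck0; cont_tac. intros; rewrite k0_eq; lra.
    + intros eps Heps. destruct (Lamlim (eps / 2) ltac:(lra)) as [S0 HS0].
      destruct (Tlam (eps / 2) ltac:(lra)) as [M1 [HM1 HM1']].
      exists (Rmax S0 M1). intros T v HT HT0 Hv.
      assert (Ev : v = Ival (fun s => s * k0 s) 0 T).
      { refine (RInt_Ival _ _ 0 T v HT0 _ _ Hv). pose proof ck0; cont_tac.
        intros; rewrite k0_eq; lra. }
      rewrite Ev, ibp.
      specialize (HS0 T ltac:(eapply Rle_trans; [apply Rmax_l|exact HT])). apply abs_lt_inv in HS0.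
      specialize (HM1' T ltac:(eapply Rle_trans; [apply Rmax_r|exact HT])).
      pose proof (lamb T HT0). assert (0 <= T * lam T) by nra.
      apply abs_lt; lra.
  - intros d Hd.
    assert (wb : forall t, 0 <= t -> Rabs (r0 t) <= 1) by apply r0_bound.
    destruct (core_upper k0 lam r0 K m 1 ck0 clam cr0 Kpos Hm k0pos lamb (fun S _ => ltac:(unfold lam; ring))
               lamlim Lamb Lamlim wb eqA_r0 eqB_r0 (d / 2) ltac:(lra)) as [T1 HT1].
    destruct (core_upper k0 lam (fun t => - r0 t) K m (-1) ck0 clam (cont_opp _ cr0) Kpos Hm k0pos lamb
               (fun S _ => ltac:(unfold lam; ring)) lamlim Lamb Lamlim) with (d := d / 2) as [T2 HT2].
    + intros t Ht. rewrite Rabs_Ropp; auto.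
    + intros t Ht. rewrite (Ival_ext _ (fun s => -1 * (lam (t - s) * r0 s))) by (intro; ring).
      rewrite Ival_scal by (pose proof clam; pose proof cr0; cont_tac).
      pose proof (eqA_r0 t Ht). lra.
    + intros t Ht. apply (deriv_eq_val _ _ (- (- K * r0 t + Ival (fun s => k0 (t - s) * r0 s) 0 t))).
      * apply (derivable_pt_lim_opp r0). apply eqB_r0; auto.
      * rewrite (Ival_ext (fun s => k0 (t - s) * - r0 s) (fun s => -1 * (k0 (t - s) * r0 s))) by (intro; ring).
        rewrite Ival_scal by (pose proof ck0; pose proof cr0; cont_tac). ring.
    + lra.
    + exists (Rmax 0 (Rmax T1 T2)). intros t Ht.
      assert (Ht0 : 0 <= t) by (eapply Rle_trans; [apply Rmax_l|exact Ht]).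
      assert (Ht1 : T1 <= t) by (eapply Rle_trans; [eapply Rle_trans; [apply Rmax_l|apply Rmax_r]|exact Ht]).
      assert (Ht2 : T2 <= t) by (eapply Rle_trans; [eapply Rle_trans; [apply Rmax_r|apply Rmax_r]|exact Ht]).
      specialize (HT1 t Ht1). specialize (HT2 t Ht2). cbv beta in HT2.
      rewrite <- r0_eq by auto.
      replace (1 / (1 + m)) with (/ (1 + m)) in HT1 by (field; lra).
      replace (-1 / (1 + m)) with (- / (1 + m)) in HT2 by (field; lra).
      apply abs_lt; lra.
Qed.

End Main.

Theorem corollary3p2 (k L r : R -> R) (alpha a : R) :
  continuous_on_nonneg k ->
  (forall t, 0 <= t -> 0 < k t) ->
  improper_int k 0 (- a) ->
  1 < alpha ->
  slowly_varying L ->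
  (forall t, 0 < t -> improper_int k t (L t * Rpower t (- alpha))) ->
  continuous_on_nonneg r ->
  r 0 = 1 ->
  (forall t, 0 < t -> exists v,
      RInt_eq (fun s => k (t - s) * r s) 0 t v /\
      derivable_pt_lim r t (a * r t + v)) ->
  exists m, improper_int (fun s => s * k s) 0 m /\
            tends_at_infty r (/ (1 + m)).
Proof.
  intros. eapply main_concl; eauto.
Qed.
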